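(* Let $M,N\in\mathbb{N}$ and let $E$ be the Motzkin code of $\mathbf{M}(M,N)$. Its generating function $f(E,z)=\sum_{u\in E}z^{|u|}$ (a formal power series) satisfies $$f(E,z)^2+(Nz-1)f(E,z)+Mz^2=0,$$ and hence $f(E,z)=\frac12\left\{1-Nz-\sqrt{(1-Nz)^2-4Mz^2}\right\}$.
   Context: Alphabet $\Sigma=\{\lambda_1,\dots,\lambda_M,\rho_1,\dots,\rho_M,1_1,\dots,1_N\}$. $\mathcal{M}(M,N)$ is the monoid with zero generated by $\Sigma$ and an identity $\mathbf{1}$, subject only to the relations $\lambda_i\rho_i=\mathbf{1}$, $\lambda_i\rho_j=0$ ($i\neq j$), each $1_i$ acts as the identity ($1_i\alpha=\alpha 1_i=\alpha$, $1_i1_j=\mathbf 1$), and $0$ is absorbing; no other relations. $\mathit{red}:\Sigma^*\to\mathcal{M}(M,N)$ sends a word to the product of its letters (empty word to $\mathbf 1$). The Motzkin shift is $\mathbf{M}(M,N)=\{x\in\Sigma^{\mathbb Z}:\mathit{red}(x_i\cdots x_j)\neq 0\ \forall i\le j\}$, and $\mathcal B_n(\mathbf M(M,N))$ denotes its set of blocks of length $n$. The Motzkin code is $E=\bigcup_{n\ge1}E_n$ with $E_n=\{w\in\mathcal B_n(\mathbf M(M,N)): w=\lambda_i v\rho_i \text{ for some } 1\le i\le M \text{ and some word } v \text{ with } \mathit{red}(v)=\mathbf 1\}$; $|u|$ denotes the length of $u$. *)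

(* Defs.v *)
From Stdlib Require Import Relations ClassicalEpsilon.
From mathcomp Require Import all_boot all_order all_algebra.
Set Implicit Arguments. Unset Strict Implicit. Unset Printing Implicit Defensive.
Import Order.TTheory GRing.Theory Num.Theory.

(* Alphabet Sigma = {lambda_1..lambda_M} + {rho_1..rho_M} + {1_1..1_N}
   (indices shifted to start at 0). *)
Definition Sigma (M N : nat) : finType := ('I_M + 'I_M + 'I_N)%type.
Definition lam {M N : nat} (i : 'I_M) : Sigma M N := inl (inl i).
Definition rho {M N : nat} (i : 'I_M) : Sigma M N := inl (inr i).
Definition one {M N : nat} (i : 'I_N) : Sigma M N := inr i.

(* The monoid with zero M(M,N), given by its presentation: elements are words
   over Sigma extended by a zero letter (None), modulo the congruence generated
   by the defining relations. *)
Definition zword (M N : nat) := seq (option (Sigma M N)).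

Inductive defrel {M N : nat} : zword M N -> zword M N -> Prop :=
  | rel_lr (i : 'I_M) : defrel [:: Some (lam i); Some (rho i)] [::]
  | rel_lr0 (i j : 'I_M) : i <> j -> defrel [:: Some (lam i); Some (rho j)] [:: None]
  | rel_one (i : 'I_N) : defrel [:: Some (one i)] [::]
  | rel_zl (a : option (Sigma M N)) : defrel [:: None; a] [:: None]
  | rel_zr (a : option (Sigma M N)) : defrel [:: a; None] [:: None].

Inductive step {M N : nat} : zword M N -> zword M N -> Prop :=
  | step_ctx (u v l r : zword M N) : defrel l r -> step (u ++ l ++ v) (u ++ r ++ v).

Definition cong {M N : nat} : relation (zword M N) := clos_refl_sym_trans _ step.

Definition red_is_zero {M N : nat} (w : seq (Sigma M N)) : Prop :=
  cong (map Some w) [:: None].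
Definition red_is_one {M N : nat} (w : seq (Sigma M N)) : Prop :=
  cong (map Some w) [::].

Definition block {T : Type} (x : int -> T) (i : int) (n : nat) : seq T :=
  mkseq (fun k => x (i + k%:Z)%R) n.

Definition in_motzkin_shift {M N : nat} (x : int -> Sigma M N) : Prop :=
  forall (i : int) (n : nat), ~ red_is_zero (block x i n.+1).

Definition is_block {M N : nat} (n : nat) (w : seq (Sigma M N)) : Prop :=
  size w = n /\
  exists x : int -> Sigma M N, in_motzkin_shift x /\ exists i : int, block x i n = w.

Definition in_code {M N : nat} (n : nat) (w : seq (Sigma M N)) : Prop :=
  is_block n w /\
  exists (i : 'I_M) (v : seq (Sigma M N)), w = lam i :: rcons v (rho i) /\ red_is_one v.

Definition pb (P : Prop) : bool :=
  if excluded_middle_informative P then true else false.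

Definition series := nat -> rat.
Local Open Scope ring_scope.
Definition psC (c : rat) : series := fun n => if n == 0%N then c else 0.
Definition psX : series := fun n => if n == 1%N then 1 else 0.
Definition psadd (a b : series) : series := fun n => a n + b n.
Definition psopp (a : series) : series := fun n => - a n.
Definition psscale (c : rat) (a : series) : series := fun n => c * a n.
Definition psmul (a b : series) : series :=
  fun n => \sum_(k < n.+1) a k * b (n - k)%N.

(* f(E,z) = sum_{u in E} z^|u| ; coefficient of z^n is #E_n for n >= 1,
   and 0 for n = 0 since E only contains words of length >= 1. *)
Definition motzkin_gf (M N : nat) : series := fun n =>
  if n == 0%N then 0
  else (#|[set w : n.-tuple (Sigma M N) | pb (in_code n (tval w))]|)%:R.

(* Main.v *)
Require Import Defs.
From Stdlib Require Import Relations ClassicalEpsilon.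
From mathcomp Require Import all_boot all_order all_algebra zify ring lra.
Set Implicit Arguments. Unset Strict Implicit. Unset Printing Implicit Defensive.

Import Order.TTheory GRing.Theory Num.Theory.
Section IntL.
Local Open Scope ring_scope.
Lemma modabs (i0 : int) (k n : nat) : (0 < n)%N ->
  absz ((i0 + k%:Z) %% n%:Z)%Z = ((absz (i0 %% n%:Z)%Z + k) %% n)%N.
Proof.
move=> n0.
have h0 : 0 <= (i0 %% n%:Z)%Z by apply: modz_ge0; rewrite eqz_nat -lt0n.
rewrite -modzDml.
have -> : (i0 %% n%:Z)%Z = (absz (i0 %% n%:Z)%Z)%:Z by rewrite gez0_abs.
by rewrite -PoszD modz_nat.
Qed.
End IntL.

Section Mon.
Variables M N : nat.
Notation S := (Sigma M N).
Definition st := option (seq 'I_M * seq 'I_M).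

Definition vstep (s : st) (a : option S) : st :=
  match s, a with
  | None, _ => None
  | _, None => None
  | Some (rs, ls), Some c =>
    match c with
    | inl (inl i) => Some (rs, i :: ls)
    | inl (inr i) => match ls with
                     | [::] => Some (rcons rs i, [::])
                     | j :: ls' => if i == j then Some (rs, ls') else None
                     end
    | inr _ => Some (rs, ls)
    end
  end.

Definition vrun (s : st) (w : zword M N) := foldl vstep s w.

Lemma vstepN s : vstep s None = None. Proof. by case: s => [[]|]. Qed.
Lemma vrunN w : vrun None w = None. Proof. by elim: w. Qed.
Lemma vrunN' w : foldl vstep None w = None. Proof. by elim: w. Qed.

Lemma defrel_inv (l r : zword M N) s : defrel l r -> vrun s l = vrun s r.
Proof.
case=> [i|i j ij|i|a|a] /=; rewrite /vrun /=.
- by case: s => [[rs ls]|] //=; rewrite eqxx.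
- case: s => [[rs ls]|] //=; case: eqP => // E; by case: ij.
- by case: s => [[rs ls]|].
- by case: s => [[rs ls]|]; case: a.
- rewrite vstepN; by case: s => [[rs ls]|].
Qed.

Lemma step_inv (a b : zword M N) s : step a b -> vrun s a = vrun s b.
Proof.
move=> H; destruct H as [u v l r H]; rewrite /vrun !foldl_cat; congr foldl.
exact: defrel_inv.
Qed.

Lemma cong_inv (a b : zword M N) s : cong a b -> vrun s a = vrun s b.
Proof.
elim=> //.
- move=> x y; exact: step_inv.
- by move=> x y z _ E1 _ E2; rewrite E1.
Qed.

Fixpoint runS (ls : seq 'I_M) (w : seq S) : option (seq 'I_M) :=
  match w with
  | [::] => Some ls
  | c :: w' =>
    match c with
    | inl (inl i) => runS (i :: ls) w'
    | inl (inr i) => match ls with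
                     | [::] => None
                     | j :: ls' => if i == j then runS ls' w' else None
                     end
    | inr _ => runS ls w'
    end
  end.

Lemma runS_cat ls a b :
  runS ls (a ++ b) = obind (fun l => runS l b) (runS ls a).
Proof.
elim: a ls => [|c a IH] ls //=.
case: c => [[i|i]|j] //; case: ls => [|k ls] //; by case: eqP.
Qed.

Lemma runS_bot ls w l b :
  runS ls w = Some l -> runS (ls ++ b) w = Some (l ++ b).
Proof.
elim: w ls => [|c w IH] ls /=; first by case=> ->.
case: c => [[i|i]|j]; [exact: (IH (i :: ls)) | | exact: IH].
case: ls => [|k ls] //=; case: eqP => // _; exact: IH.
Qed.

Lemma bridge1 ls v l :
  runS ls v = Some l -> vrun (Some ([::], ls)) (map Some v) = Some ([::], l).
Proof.
elim: v ls => [|c v IH] ls /=; first by case=> ->.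
case: c => [[i|i]|j]; [exact: (IH (i :: ls)) | | exact: IH].
case: ls => [|k ls] //=; case: eqP => // _; exact: IH.
Qed.

Lemma vrun_rs rs ls w rs' l :
  vrun (Some (rs, ls)) w = Some (rs', l) -> size rs <= size rs'.
Proof.
elim: w rs ls => [|c w IH] rs ls /=; first by case=> -> _.
case: c => [c|]; last by rewrite /vrun /= ?vrunN'.
case: c => [[i|i]|j] /=.
- exact: IH.
- case: ls => [|k ls] /=.
  + move/IH; rewrite size_rcons; exact: ltnW.
  + case: eqP => _; [exact: IH | by rewrite /vrun /= ?vrunN'].
- exact: IH.
Qed.

Lemma bridge2 ls v l :
  vrun (Some ([::], ls)) (map Some v) = Some ([::], l) -> runS ls v = Some l.
Proof.
elim: v ls => [|c v IH] ls /=; first by case=> ->.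
case: c => [[i|i]|j]; [exact: (IH (i :: ls)) | | exact: IH].
case: ls => [|k ls] /=.
- by move/vrun_rs.
- case: eqP => _; [exact: IH | by rewrite /vrun /= ?vrunN'].
Qed.

Lemma vrun_zero (b : zword M N) rs0 ls0 rs ls :
  vrun (Some (rs0, ls0)) b = None -> vrun (Some (rs, ls0 ++ ls)) b = None.
Proof.
elim: b rs0 ls0 rs ls => [|c b IH] rs0 ls0 rs ls //=.
case: c => [c|]; last by rewrite /vrun /= ?vrunN'.
case: c => [[i|i]|j] /=.
- exact: (IH _ (i :: ls0)).
- case: ls0 => [|k ls0] /=.
  + case: ls => [|k ls] /=.
    * exact: (IH _ [::]).
    * case: eqP => _ H; last by rewrite /vrun /= ?vrunN'.
      exact: (IH _ [::] _ ls H).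
  + case: eqP => _ H; last by rewrite /vrun /= ?vrunN'.
    exact: IH H.
- exact: IH.
Qed.

Lemma cong_ctx (a b l r : zword M N) :
  cong a b -> cong (l ++ a ++ r) (l ++ b ++ r).
Proof.
elim.
- move=> x y H; apply: rst_step; destruct H as [u v l0 r0 H].
  have := step_ctx (l ++ u) (v ++ r) H; by rewrite -!catA.
- move=> x; exact: rst_refl.
- move=> x y _ H; exact: rst_sym.
- move=> x y z _ H1 _ H2; exact: rst_trans H2.
Qed.

Lemma split_first u : forall k ls s',
  runS (k :: ls) u = Some s' -> size s' <= size ls ->
  exists u1 u2, [/\ u = u1 ++ rho k :: u2, runS [::] u1 = Some [::]
                  & runS ls u2 = Some s'].
Proof.
elim: {u}(size u) {-2}u (leqnn (size u)) => [|n IH] [|c u] //= Hs k ls s'.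
- by case=> <-; rewrite ltnn.
- by case=> <-; rewrite ltnn.
case: c => [[i|i]|j].
- move=> H Hs'.
  have [t1 [t2 [E1 R1 R2]]] := IH u Hs _ _ _ H (leqW Hs').
  have Ht2 : size t2 <= n.
    by move: Hs; rewrite E1 size_cat /=; lia.
  have [t3 [t4 [E3 R3 R4]]] := IH t2 Ht2 _ _ _ R2 Hs'.
  exists (lam i :: t1 ++ rho i :: t3), t4; split.
  + by rewrite E1 E3 /= -catA.
  + rewrite /= runS_cat (runS_bot [::i] R1) /= eqxx; exact: R3.
  + exact: R4.
- case: eqP => // -> H _; by exists [::], u.
- move=> H Hs'.
  have [t1 [t2 [E1 R1 R2]]] := IH u Hs _ _ _ H Hs'.
  by exists (Defs.one j :: t1), t2; rewrite E1.
Qed.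

End Mon.

Section Mon2.
Variables M N : nat.
Notation S := (Sigma M N).

Lemma red_one_iff (v : seq S) : red_is_one v <-> runS [::] v = Some [::].
Proof.
split.
- move=> H; apply: bridge2; rewrite /red_is_one in H.
  by rewrite (cong_inv (Some ([::], [::])) H).
elim: {v}(size v) {-2}v (leqnn (size v)) => [|n IH] [|c v] //= Hs.
- move=> _; exact: rst_refl.
- move=> _; exact: rst_refl.
case: c => [[k|k]|j].
- move=> H.
  have [u1 [u2 [E R1 R2]]] := split_first H (leqnn 0).
  have h1 : size u1 <= n by move: Hs; rewrite E size_cat /=; lia.
  have h2 : size u2 <= n by move: Hs; rewrite E size_cat /=; lia.
  have C1 := IH u1 h1 R1; have C2 := IH u2 h2 R2.
  suff : cong ([:: Some (lam k)] ++ map Some u1 ++ (Some (rho k) :: map Some u2)) [::].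
    by rewrite /red_is_one E /= map_cat.
  apply: rst_trans (_ : cong ([:: Some (lam k)] ++ [::] ++ (Some (rho k) :: map Some u2)) _).
    exact: cong_ctx.
  apply: rst_trans (_ : cong ([::] ++ [::] ++ map Some u2) _); last exact: C2.
  apply: rst_step.
  have := step_ctx [::] (map Some u2) (rel_lr k); by [].
- by [].
- move=> H; rewrite /red_is_one /=.
  apply: rst_trans (_ : cong ([::] ++ [::] ++ map Some v) _); last exact: IH.
  apply: rst_step.
  have := step_ctx [::] (map Some v) (rel_one (M:=M) j); by [].
Qed.

Lemma nonzero_factor (A B C : seq S) :
  runS [::] (A ++ B ++ C) = Some [::] -> ~ red_is_zero B.
Proof.
move=> /bridge1 H Z.
have HB : vrun (Some ([::], [::])) (map Some B) = None.
  by rewrite (cong_inv (Some ([::], [::])) Z).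
move: H; rewrite !map_cat /vrun !foldl_cat.
case E: (foldl (@vstep M N) (Some ([::], [::])) (map Some A)) => [[rs ls]|]; last by rewrite !vrunN'.
by have := vrun_zero rs ls HB; rewrite /= /vrun => ->; rewrite vrunN'.
Qed.

Lemma nth_flat (d : S) w K j : j < K * size w ->
  nth d (flatten (nseq K w)) j = nth d w (j %% size w).
Proof.
elim: K j => [|K IH] j; first by rewrite mul0n.
rewrite mulSn /= nth_cat => Hj.
case: ltnP => h; first by rewrite modn_small.
rewrite IH; last by move: Hj h; move: (K * size w) => t; lia.
by rewrite -{2}(subnK h) modnDr.
Qed.

Lemma runS_pow (w : seq S) K : runS [::] w = Some [::] -> runS [::] (flatten (nseq K w)) = Some [::].
Proof. move=> H; elim: K => [|K IH] //=; by rewrite runS_cat H. Qed.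

Lemma code_block (w : seq S) i v :
  w = lam i :: rcons v (rho i) -> runS [::] v = Some [::] -> is_block (size w) w.
Proof.
move=> Ew Rv; split=> //.
set n := size w.
have n0 : 0 < n by rewrite /n Ew.
have Rw : runS [::] w = Some [::].
  by rewrite Ew /= -cats1 runS_cat (runS_bot [:: i] Rv) /= eqxx.
pose x := fun k : int => nth (lam i) w (absz (k %% n%:Z)%Z).
exists x; split; last first.
  exists 0%R; apply: (@eq_from_nth _ (lam i)); first by rewrite size_mkseq.
  move=> k; rewrite size_mkseq => hk; rewrite nth_mkseq // /x.
  by rewrite (modabs _ _ n0) mod0z /= add0n modn_small.
move=> i0 m.
set a := absz (i0 %% n%:Z)%Z.
set K := a + m.+1.
set W := flatten (nseq K w).
have sW : size W = K * n by rewrite /W size_flatten /shape map_nseq sumn_nseq mulnC.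
have Eb : block x i0 m.+1 = take m.+1 (drop a W).
  apply: (@eq_from_nth _ (lam i)).
    rewrite size_mkseq size_take size_drop sW.
    have : K <= K * n by rewrite leq_pmulr.
    rewrite /K; case: ltnP => //; lia.
  move=> k; rewrite size_mkseq => hk; rewrite nth_mkseq // /x.
  rewrite nth_take // nth_drop nth_flat; first by rewrite (modabs _ _ n0).
  have : K <= K * n by rewrite leq_pmulr.
  rewrite /K; lia.
apply: (@nonzero_factor (take a W) _ (drop m.+1 (drop a W))).
by rewrite Eb !cat_take_drop runS_pow.
Qed.
End Mon2.

Section Count.
Variables M N : nat.
Notation S := (Sigma M N).

Definition words n : seq (seq S) := map (@tval n S) (enum {: n.-tuple S}).

Lemma card_count n (P : seq S -> bool) :
  #|[set w : n.-tuple S | P (tval w)]| = count P (words n).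
Proof.
rewrite cardE size_filter /words count_map -enumT; apply: eq_count => t.
by rewrite /= inE.
Qed.

Lemma words_uniq n : uniq (words n).
Proof. rewrite map_inj_uniq ?enum_uniq //; exact: val_inj. Qed.

Lemma mem_words n w : (w \in words n) = (size w == n).
Proof.
apply/mapP/eqP => [[t _ ->]|H]; first exact: size_tuple.
by exists (Tuple (introT eqP H)); rewrite ?mem_enum.
Qed.
End Count.

Lemma pbP (P : Prop) : reflect P (pb P).
Proof. rewrite /pb; case: excluded_middle_informative => h; by constructor. Qed.

Lemma uniq_flatten_map (A B : eqType) (f : A -> seq B) s :
  uniq s -> (forall a, a \in s -> uniq (f a)) ->
  (forall a b x, a \in s -> b \in s -> x \in f a -> x \in f b -> a = b) ->
  uniq (flatten (map f s)).
Proof.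
elim: s => [|a s IH] //= /andP[nas us] Hu Hd.
rewrite cat_uniq Hu ?mem_head // IH //; last first.
- move=> a' b' x ha hb; apply: Hd; by rewrite inE ?ha ?hb orbT.
- move=> a' ha; apply: Hu; by rewrite inE ha orbT.
rewrite andbT; apply/hasPn => x /flattenP [t /mapP [b hb ->] hx].
apply/negP => hx'.
have E : a = b by apply: (Hd a b x) => //; rewrite inE ?eqxx ?hb ?orbT.
by move: nas; rewrite E hb.
Qed.

Section Rec.
Variables M N : nat.
Notation S := (Sigma M N).

Definition codeP (w : seq S) : Prop :=
  exists i v, w = lam i :: rcons v (rho i) /\ runS [::] v = Some [::].
Definition codeb (w : seq S) : bool := pb (codeP w).
Definition C n := filter codeb (words M N n).
Definition e n := size (C n).

Lemma mem_C n w : (w \in C n) = codeb w && (size w == n).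
Proof. by rewrite mem_filter mem_words. Qed.

Lemma code_run p : codeP p -> runS [::] p = Some [::].
Proof.
move=> [i [v [-> R]]]; by rewrite /= -cats1 runS_cat (runS_bot [:: i] R) /= eqxx.
Qed.

Lemma prefix_run (v t s : seq S) : v = t ++ s -> runS [::] v = Some [::] ->
  exists l, runS [::] t = Some l.
Proof.
move=> -> ; rewrite runS_cat; case: (runS [::] t) => //= l _; by exists l.
Qed.

End Rec.
Section Rec.
Variables M N : nat.
Notation S := (Sigma M N).
Lemma ltSS a b : a.+1 < b.+2 -> a <= b. Proof. lia. Qed.
Lemma code_prefix (p : seq S) k : codeP p -> 0 < k < size p -> runS [::] (take k p) <> Some [::].
Proof.
move=> [i [v [-> R]]]; case: k => [|k] //= hk0.
have hk : k <= size v.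
  move: hk0; rewrite size_rcons; exact: ltSS.
rewrite -cats1 takel_cat; last exact: hk.
have [l Hl] := prefix_run (esym (cat_take_drop k v)) R.
by rewrite (runS_bot [:: i] Hl); case: l {Hl}.
Qed.

Lemma code_size (p : seq S) : codeP p -> 0 < size p.
Proof. by move=> [i [v [-> _]]]. Qed.

Lemma prime_uniq (p1 p2 r1 r2 : seq S) : codeP p1 -> codeP p2 -> p1 ++ r1 = p2 ++ r2 -> p1 = p2.
Proof.
move=> c1 c2 E.
case: (ltngtP (size p1) (size p2)) => h.
- have T : take (size p1) p2 = p1.
    rewrite -(takel_cat r2 (ltnW h)) -E; exact: take_size_cat.
  have := code_prefix c2 (k := size p1); rewrite T (code_size c1) h.
  move=> /(_ isT); by rewrite (code_run c1).
- have T : take (size p2) p1 = p2.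
    rewrite -(takel_cat r1 (ltnW h)) E; exact: take_size_cat.
  have := code_prefix c1 (k := size p2); rewrite T (code_size c2) h.
  move=> /(_ isT); by rewrite (code_run c2).
- have := congr1 (take (size p1)) E.
  rewrite take_size_cat; last by [].
  rewrite h take_size_cat; last by []. by [].
Qed.
End Rec.

Section Main.
Variables M N : nat.
Notation S := (Sigma M N).
Notation C := (C M N).

Definition ins (j : 'I_N) (w : seq S) : seq S :=
  match w with a :: r => a :: Defs.one j :: r | [::] => [::] end.
Definition cat2 (p q : seq S) : seq S :=
  match q with a :: r => a :: p ++ r | [::] => [::] end.
Definition L1 n : seq (seq S) :=
  if n == 2 then [seq [:: lam i; rho i] | i <- enum 'I_M] else [::].
Definition L2 n := [seq ins j w | j <- enum 'I_N, w <- C n.-1].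
Definition L3 n := flatten [seq [seq cat2 p q | p <- C a, q <- C (n - a)] | a <- iota 0 n.+1].

Lemma memC n (w : seq S) : w \in C n <-> codeP w /\ size w = n.
Proof.
rewrite mem_C; split.
- by case/andP => /pbP H /eqP.
- by case=> H ->; rewrite eqxx andbT; apply/pbP.
Qed.

Lemma fwd n (w : seq S) : 0 < n -> codeP w -> size w = n -> w \in L1 n ++ L2 n ++ L3 n.
Proof.
move=> n0 cw sw; have [i [v [Ew Rv]]] := cw.
rewrite mem_cat (mem_cat w (L2 n)); case: v Ew Rv => [|c v] Ew Rv.
- have n2 : n = 2 by rewrite -sw Ew.
  rewrite /L1 n2 /= Ew; apply/orP; left; apply: map_f; exact: mem_enum.
case: c Ew Rv => [[k|k]|j] Ew Rv.
- have [u1 [u2 [E R1 R2]]] := split_first Rv (leqnn 0).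
  set p : seq S := lam k :: rcons u1 (rho k).
  set q : seq S := lam i :: rcons u2 (rho i).
  have cp : codeP p by exists k, u1.
  have cq : codeP q by exists i, u2.
  have Hw : w = cat2 p q by rewrite Ew E /cat2 /q /p /= rcons_cat cat_rcons.
  have sz : size p + size q = n.
    by rewrite -sw Hw /cat2 /q /= size_cat addSn addnS.
  apply/orP; right; apply/orP; right.
  apply/flattenP; exists [seq cat2 x y | x <- C (size p), y <- C (n - size p)].
    apply/mapP; exists (size p); last by []. rewrite mem_iota add0n ltnS -sz; exact: leq_addr.
  rewrite Hw; apply: allpairs_f; apply/memC; split=> //.
  by rewrite -sz addKn.
- by [].
- set q : seq S := lam i :: rcons v (rho i).
  have cq : codeP q by exists i, v.
  apply/orP; right; apply/orP; left.
  have -> : w = ins j q by rewrite Ew.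
  apply: allpairs_f; first exact: mem_enum.
  apply/memC; split=> //; by rewrite -sw Ew /q /= !size_rcons.
Qed.

Lemma bwd n (w : seq S) : 0 < n -> w \in L1 n ++ L2 n ++ L3 n -> codeP w /\ size w = n.
Proof.
move=> n0; rewrite mem_cat (mem_cat w (L2 n)); case/or3P.
- rewrite /L1; case: eqP => [->|] //; case/mapP => i _ ->; split=> //.
  exists i, [::]; by split.
- case/allpairsP => [[j q]] /= [_ /memC [[i [v [Eq Rv]]] sq] ->] /=.
  rewrite Eq /=; split.
  + exists i, (Defs.one j :: v); by split.
  + move: sq; rewrite Eq /= !size_rcons; case: n n0 => [|n] h0 /= E0; [by [] | by rewrite E0].
- case/flattenP => t /mapP [a ha ->] /allpairsP [[p q]] /= [/memC [cp sp] /memC [[i [v [Eq Rv]]] sq] ->] /=.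
  rewrite Eq /=; split.
  + exists i, (p ++ v); split; first by rewrite rcons_cat.
    by rewrite runS_cat (code_run cp).
  + move: ha; rewrite mem_iota add0n ltnS => ha.
    move: sq; rewrite Eq /= size_cat !size_rcons sp => sq.
    by rewrite -addnS sq subnKC.
Qed.

Definition kind (o : option S) : nat :=
  match o with
  | Some (inl (inl _)) => 0 | Some (inl (inr _)) => 1 | Some (inr _) => 2 | None => 3
  end.
Definition sec (w : seq S) := ohead (behead w).

Lemma kL1 n x : x \in L1 n -> kind (sec x) = 1.
Proof. rewrite /L1; case: eqP => _ //; by case/mapP => i _ ->. Qed.

Lemma kL2 n x : x \in L2 n -> kind (sec x) = 2.
Proof.
case/allpairsP => [[j q]] /= [_ /memC [[i [v [Eq _]]] _] ->]; by rewrite Eq.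
Qed.

Lemma kL3 n x : x \in L3 n -> kind (sec x) = 0.
Proof.
case/flattenP => t /mapP [a ha ->] /allpairsP [[p q]] /= [/memC [[k [u [Ep _]]] _] /memC [[i [v [Eq _]]] _] ->].
by rewrite Eq Ep.
Qed.

Lemma ins_inj j j' (q q' : seq S) : codeP q -> codeP q' -> ins j q = ins j' q' -> (j, q) = (j', q').
Proof.
move=> [i [v [-> _]]] [i' [v' [-> _]]] /= [-> -> ->]; by [].
Qed.

Lemma cat2_inj (p p' q q' : seq S) : codeP p -> codeP p' -> codeP q -> codeP q' ->
  cat2 p q = cat2 p' q' -> p = p' /\ q = q'.
Proof.
move=> cp cp' [i [v [-> _]]] [i' [v' [-> _]]] /= [Ei E].
have Epp := prime_uniq cp cp' E.
have := congr1 (drop (size p')) E; rewrite Epp !drop_size_cat; [|by []|by []].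
move=> ->; by rewrite Ei.
Qed.

Lemma uniqL n : uniq (L1 n ++ L2 n ++ L3 n).
Proof.
have uC a : uniq (C a) by apply: filter_uniq; exact: words_uniq.
rewrite cat_uniq (cat_uniq (L2 n)); apply/and5P; split.
- rewrite /L1; case: eqP => _ //; rewrite map_inj_uniq ?enum_uniq //.
  by move=> i i' [].
- apply/hasPn => x; rewrite mem_cat => /orP [] /[dup] hx => [/kL2|/kL3] k;
    apply/negP => /kL1; by rewrite k.
- apply: allpairs_uniq; [exact: enum_uniq | exact: uC |].
  move=> [j q] [j' q'] /allpairsP [[j1 q1]] /= [_ /memC [c1 _] [-> ->]]
    /allpairsP [[j2 q2]] /= [_ /memC [c2 _] [-> ->]] /=.
  exact: ins_inj.
- apply/hasPn => x /kL3 k; apply/negP => /kL2; by rewrite k.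
- apply: uniq_flatten_map; first exact: iota_uniq.
  + move=> a _; apply: allpairs_uniq; [exact: uC | exact: uC |].
    move=> [p q] [p' q'] /allpairsP [[p1 q1]] /= [/memC [c1 _] /memC [d1 _] [-> ->]]
      /allpairsP [[p2 q2]] /= [/memC [c2 _] /memC [d2 _] [-> ->]] /= E.
    by have [-> ->] := cat2_inj c1 c2 d1 d2 E.
  + move=> a b x _ _ /allpairsP [[p q]] /= [/memC [c1 s1] /memC [d1 _] ->]
      /allpairsP [[p' q']] /= [/memC [c2 s2] /memC [d2 _] E].
    have [Ep _] := cat2_inj c1 c2 d1 d2 E.
    by rewrite -s1 -s2 Ep.
Qed.

Lemma e_rec n : 0 < n ->
  e M N n = (if n == 2 then M else 0) + N * e M N n.-1 + \sum_(a < n.+1) e M N a * e M N (n - a).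
Proof.
move=> n0.
have P : perm_eq (C n) (L1 n ++ L2 n ++ L3 n).
  apply: uniq_perm; [apply: filter_uniq; exact: words_uniq | exact: uniqL |].
  move=> x; apply/idP/idP.
  - move=> hx; have [cx sx] := (memC n x).1 hx; exact: fwd.
  - move=> hx; apply/(memC n x).2; exact: bwd.
rewrite /e (perm_size P) (size_cat (L1 n)) (size_cat (L2 n)) -addnA; congr (_ + _).
- rewrite /L1; case: eqP => _ //; by rewrite size_map size_enum_ord.
congr (_ + _).
- by rewrite /L2 size_allpairs size_enum_ord.
rewrite /L3 size_flatten /shape -map_comp sumnE big_map.
have -> : iota 0 n.+1 = index_iota 0 n.+1 by rewrite /index_iota subn0.
rewrite big_mkord.
apply: eq_bigr => a _ /=; by rewrite size_allpairs.
Qed.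
End Main.
Import Order.TTheory GRing.Theory Num.Theory.
Local Open Scope ring_scope.

Lemma e0 M N : (e M N 0 = 0)%N.
Proof.
rewrite /e; case E: (C M N 0) => [|x s] //.
have : x \in C M N 0 by rewrite E mem_head.
by move/memC => [[i [v [-> _]]]].
Qed.

Lemma pb_eq (P Q : Prop) : (P <-> Q) -> pb P = pb Q.
Proof. move=> [h1 h2]; by apply/pbP/pbP. Qed.

Lemma in_code_iff M N n (w : seq (Sigma M N)) : size w = n -> (in_code n w <-> codeP w).
Proof.
move=> sw; split.
- move=> [_ [i [v [E R]]]]; exists i, v; split=> //; exact/red_one_iff.
- move=> [i [v [E R]]]; split.
  + rewrite -sw; exact: code_block E R.
  + exists i, v; split=> //; exact/red_one_iff.
Qed.

Lemma gfE M N n : motzkin_gf M N n = (e M N n)%:R.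
Proof.
rewrite /motzkin_gf; case: eqP => [->|_]; first by rewrite e0.
congr (_%:R); rewrite (@card_count M N n (fun w => pb (in_code n w))) /e size_filter.
apply: eq_in_count => w; rewrite mem_words => /eqP sw.
rewrite /codeb; apply: pb_eq; exact: in_code_iff.
Qed.

Lemma sumX n : psmul psX psX n = if n == 2%N then 1 else 0.
Proof.
rewrite /psmul; case: n => [|m]; first by rewrite big_ord_recl big_ord0 /psX.
rewrite big_ord_recl big_ord_recl /=.
rewrite big1; last first.
  by move=> i _; rewrite /psX /= mul0r.
rewrite /psX /= mul0r add0r addr0 mul1r subSS subn0.
by case: m => [|[|m]].
Qed.

Definition cser N := psadd (psscale N%:R psX) (psC (-1)).
Definition hser N := psadd (psC 1) (psscale (- N%:R) psX).

Lemma sumc N (f : series) n :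
  psmul (cser N) f n = (if n is m.+1 then N%:R * f m else 0) - f n.
Proof.
rewrite /psmul /cser /psadd /psscale /psC /psX.
case: n => [|m]; first by rewrite big_ord_recl big_ord0 /= subn0; ring.
rewrite big_ord_recl big_ord_recl /= big1; last first.
  by move=> i _ /=; rewrite mulr0 add0r mul0r.
rewrite subn0 subSS subn0 /=; ring.
Qed.

Lemma psmulC (a b : series) n : psmul a b n = psmul b a n.
Proof.
rewrite /psmul (reindex_inj rev_ord_inj) /=; apply: eq_bigr => k _.
rewrite subSS subKn; last by rewrite -ltnS.
by rewrite mulrC.
Qed.


Lemma P1 M N n : let f := motzkin_gf M N in
  psmul f f n + psmul (cser N) f n + M%:R * psmul psX psX n = 0.
Proof.
move=> f; rewrite sumc sumX.
have ff k : psmul f f k = (\sum_(a < k.+1) e M N a * e M N (k - a))%:R.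
  rewrite /psmul natr_sum; apply: eq_bigr => a _; by rewrite /f !gfE natrM.
case: n => [|m].
  rewrite ff big_ord_recl big_ord0 e0 /f gfE e0 /=; ring.
rewrite ff /f !gfE (@e_rec M N m.+1) //= !natrD !natrM.
case: (m.+1 == 2%N) => /=; ring.
Qed.

Theorem theorem2p1 (M N : nat) :
  let f := motzkin_gf M N in
  (forall n : nat,
     psadd (psadd (psmul f f) (psmul (psadd (psscale N%:R psX) (psC (-1))) f))
           (psscale M%:R (psmul psX psX)) n = 0)
  /\
  (exists g : series,
     g 0%N = 1 /\
     (forall n : nat,
        psmul g g n =
        psadd (psmul (psadd (psC 1) (psscale (- N%:R) psX))
                     (psadd (psC 1) (psscale (- N%:R) psX)))
              (psscale (- 4 * M%:R) (psmul psX psX)) n) /\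
     (forall n : nat,
        f n = psscale (1 / 2) (psadd (psadd (psC 1) (psscale (- N%:R) psX)) (psopp g)) n)).
Proof.
move=> f; split; first by move=> n; exact: (P1 M N n).
pose h := hser N.
exists (fun n => h n - 2 * f n); split; [|split].
- by rewrite /h /hser /psadd /psC /psscale /psX /f gfE e0 /=; ring.
- move=> n.
  have E1 : psmul f f n + psmul (cser N) f n + M%:R * psmul psX psX n = 0 := P1 M N n.
  rewrite sumc in E1.
  have Ec : ((if n is m.+1 then N%:R * f m else 0) - f n) = - psmul h f n.
    rewrite /psmul /h /hser /psadd /psC /psscale /psX.
    case: n {E1} => [|m]; first by rewrite big_ord_recl big_ord0 /= subn0; ring.
    rewrite big_ord_recl big_ord_recl /= big1; last first.
      by move=> i _ /=; rewrite mulr0 addr0 mul0r.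
    rewrite subn0 subSS subn0 /=; ring.
  rewrite Ec in E1.
  have Eg : psmul (fun n => h n - 2 * f n) (fun n => h n - 2 * f n) n =
     psmul h h n - 2 * psmul h f n - 2 * psmul f h n + 4 * psmul f f n.
    rewrite /psmul !mulr_sumr -!sumrN -!big_split /=; apply: eq_bigr => k _; ring.
  rewrite Eg (psmulC f h) /psadd /psscale -/h.
  have : psmul f f n = psmul h f n - M%:R * psmul psX psX n.
    by move: E1; lra.
  move=> ->; ring.
- move=> n; rewrite /h /hser /psscale /psadd /psopp /=.
  have two : (2 : rat) != 0 by [].
  move: (f n) (psC 1 n) (psX n) => a b c; field; exact: two.
Qed.
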